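(* Let $S$ be a nonabelian finite simple group, $I$ a set, and $G=S^I$ (the Cartesian product). Then every finite quotient of $G$ by an abstract normal subgroup of finite index is semisimple, i.e. is a direct product of finitely many nonabelian finite simple groups. *)

(* Defs.v *)
From mathcomp Require Import all_boot all_order all_algebra all_fingroup all_solvable.
Set Implicit Arguments. Unset Strict Implicit. Unset Printing Implicit Defensive.
Import GroupScope.

(* The (unrestricted) Cartesian power S^I of the finite group S = [set: gT],
   represented by the type I -> gT with pointwise multiplication.  I is an
   arbitrary (possibly infinite) type, so S^I is an abstract group, not a
   finGroupType. *)
Definition cart_mul (I : Type) (gT : finGroupType) (x y : I -> gT) : I -> gT :=
  fun i => x i * y i.

Definition cart_hom (I : Type) (gT H : finGroupType) (f : (I -> gT) -> H) : Prop :=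
  forall x y : I -> gT, f (cart_mul x y) = f x * f y.

Definition semisimple_fg (H : finGroupType) (G : {set H}) : Prop :=
  exists n : nat, exists A : 'I_n -> {group H},
    (forall i, simple (A i) /\ ~~ abelian (A i)) /\
    \big[dprod/1]_(i < n) (A i : {set H}) = G.

(* Main.v *)
Require Import Defs.
From mathcomp Require Import all_boot all_order all_algebra all_fingroup all_solvable.
From Stdlib Require Import Classical ClassicalEpsilon FunctionalExtensionality.
Set Implicit Arguments. Unset Strict Implicit. Unset Printing Implicit Defensive.
Import GroupScope.

Section Basics.
Variables (gT : finGroupType) (I : Type) (H : finGroupType).
Implicit Types (g : (I -> gT) -> H) (A : I -> bool) (y z : I -> gT).

Definition restr A y : I -> gT := fun i => if A i then y i else 1.
Definition compl A : I -> bool := fun i => ~~ A i.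
Definition cone : I -> gT := fun _ => 1.
Definition pinv y : I -> gT := fun i => (y i)^-1.

Lemma hom1 g : cart_hom g -> g cone = 1.
Proof.
move=> Hg; have e := Hg cone cone.
have eo : cart_mul cone cone = cone.
  by apply: functional_extensionality => i; rewrite /cart_mul /cone mulg1.
rewrite eo in e.
have := congr1 (mulg (g cone)^-1) e; by rewrite mulKg mulVg => <-.
Qed.

Lemma homV g y : cart_hom g -> g (pinv y) = (g y)^-1.
Proof.
move=> Hg; have e : cart_mul (pinv y) y = cone.
  by apply: functional_extensionality => i; rewrite /cart_mul /pinv /cone mulVg.
have := Hg (pinv y) y; rewrite e hom1 // => e1.
by rewrite -[g (pinv y)]mulg1 -(mulgV (g y)) mulgA -e1 mul1g.
Qed.

Lemma restr_hom g A : cart_hom g -> cart_hom (fun y => g (restr A y)).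
Proof.
move=> Hg y z; rewrite -Hg; congr g.
by apply: functional_extensionality => i; rewrite /restr /cart_mul; case: (A i); rewrite ?mulg1.
Qed.

Lemma restr_split A y : y = cart_mul (restr A y) (restr (compl A) y).
Proof.
by apply: functional_extensionality => i; rewrite /restr /cart_mul /compl; case: (A i); rewrite ?mulg1 ?mul1g.
Qed.

Lemma restr_comm g A y z : cart_hom g ->
  commute (g (restr A y)) (g (restr (compl A) z)).
Proof.
move=> Hg; rewrite /commute -!Hg; congr g.
by apply: functional_extensionality => i; rewrite /restr /cart_mul /compl; case: (A i); rewrite ?mulg1 ?mul1g.
Qed.

Lemma hom_comm g y z : cart_hom g ->
  g (fun i => [~ y i, z i]) = [~ g y, g z].
Proof.
move=> Hg.
have -> : (fun i => [~ y i, z i]) = cart_mul (pinv y) (cart_mul (pinv z) (cart_mul y z)).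
  by apply: functional_extensionality => i; rewrite /cart_mul /pinv commgEl conjgE.
by rewrite !Hg !homV // commgEl conjgE.
Qed.

End Basics.


Section Perfect.
Variables (gT : finGroupType) (HS : simple [set: gT]) (HnA : ~~ abelian [set: gT]).

Lemma perfectT : [~: [set: gT], [set: gT]] = [set: gT].
Proof.
have hn := der_normal 1 [set: gT]%G.
have [_ hs] := (elimT (simpleP [set: gT]%G)) HS.
case: (hs _ hn) => e.
  by move: HnA; rewrite (sameP derG1P eqP) -(inj_eq val_inj) /= e eqxx.
by rewrite -derg1 -[RHS]/(gval [set: gT]%G) -e.
Qed.

Lemma comm_dec1 (s : gT) : exists u : nat * (nat -> gT * gT),
  s = \prod_(k < u.1) [~ (u.2 k).1, (u.2 k).2].
Proof.
have : s \in [~: [set: gT], [set: gT]] by rewrite perfectT inE.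
case/gen_prodgP => n [c Hc ->].
have [p Hp] : exists p : 'I_n -> gT * gT, forall i, c i = [~ (p i).1, (p i).2].
  apply: (@fin_all_exists _ (fun _ => (gT * gT)%type) (fun i p => c i = [~ p.1, p.2])) => i; case/imset2P: (Hc i) => a b _ _ ->.
  by exists (a, b).
exists (n, fun k => if insub k is Some i then p i else (1, 1)) => /=.
by apply: eq_bigr => i _; rewrite valK Hp.
Qed.

Lemma comm_dec : exists (N : nat) (c : gT -> nat -> gT * gT),
  forall s, s = \prod_(k < N) [~ (c s k).1, (c s k).2].
Proof.
have [F HF] := fin_all_exists comm_dec1.
exists (\max_s (F s).1), (fun s k => if k < (F s).1 then (F s).2 k else (1, 1)).
move=> s; rewrite {1}(HF s).
rewrite (big_ord_widen _ (fun k => [~ ((F s).2 k).1, ((F s).2 k).2]) (@leq_bigmax _ (fun s => (F s).1) s)).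
rewrite big_mkcond; apply: eq_bigr => i _; case: ifP => //= _.
by rewrite comm1g.
Qed.

Variables (I : Type) (H : finGroupType).

Lemma abelian_trivial (g : (I -> gT) -> H) : cart_hom g ->
  (forall y z, commute (g y) (g z)) -> forall x, g x = 1.
Proof.
move=> Hg Hc x; have [N [c Hd]] := comm_dec.
pose X m := fun i => \prod_(k < m) [~ (c (x i) k).1, (c (x i) k).2].
have -> : x = X N by apply: functional_extensionality => i; rewrite /X -Hd.
clear Hd; elim: N => [|m IH].
  have -> : X 0 = @cone gT I by apply: functional_extensionality => i; rewrite /X big_ord0.
  exact: hom1.
have -> : X m.+1 = cart_mul (X m) (fun i => [~ (c (x i) m).1, (c (x i) m).2]).
  by apply: functional_extensionality => i; rewrite /X big_ord_recr.
rewrite Hg IH mul1g (hom_comm (fun i => (c (x i) m).1) (fun i => (c (x i) m).2) Hg).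
by apply/eqP/commgP.
Qed.

End Perfect.


Section Comb.
Variable H : finGroupType.

Lemma semisimple_step (K B : {group H}) :
  semisimple_fg K -> simple B -> ~~ abelian B -> B \subset 'C(K) ->
  semisimple_fg (K * B).
Proof.
move=> sK sB nB cBK; have [n [A [HA eK]]] := sK.
have nKB : (K :&: B)%G <| B.
  rewrite /normal /= subsetIr /= normsI ?normG //.
  exact: subset_trans cBK (cent_sub _).
have [_ hs] := (elimT (simpleP B)) sB.
case: (hs _ nKB) => e.
  have e' : K :&: B = 1 by rewrite -[LHS]/(gval (K :&: B)%G) e.
  pose A' (i : 'I_n.+1) : {group H} := if unlift ord_max i is Some j then A j else B.
  exists n.+1, A'; split.
    by move=> i; rewrite /A'; case: (unlift ord_max i) => [j|] //; exact: HA.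
  rewrite big_ord_recr /= /A' unlift_none.
  have -> : \big[dprod/1]_(i < n) (gval (match unlift ord_max (widen_ord (leqnSn n) i) with
               | Some j => A j | None => B end)) = K.
    rewrite -eK; apply: eq_bigr => i _.
    have -> : widen_ord (leqnSn n) i = lift ord_max i by apply: val_inj; exact: (esym (lift_max i)).
    by have -> := liftK (@ord_max n) i.
  by rewrite dprodE // centsC.
have e' : K :&: B = B by rewrite -[LHS]/(gval (K :&: B)%G) e.
rewrite mulGSid //; exact/setIidPr.
Qed.

Lemma semisimple_comb n (B : 'I_n -> {group H}) :
  (forall j, simple (B j) /\ ~~ abelian (B j)) ->
  forall (K L : {group H}), \big[dprod/1]_(j < n) (B j : {set H}) = L ->
  semisimple_fg K -> L \subset 'C(K) -> semisimple_fg (K * L).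
Proof.
elim: n B => [|n IH] B HB K L eL sK cLK.
  by move: eL; rewrite big_ord0 => <-; rewrite mulg1.
move: eL; rewrite big_ord_recr /= => eL.
have [[L' Bm defL' defBm] eqL cBL' _] := dprodP eL.
rewrite defL' defBm in eqL cBL'.
have sL'L : L' \subset L by rewrite -eqL mulG_subl.
have sBmL : Bm \subset L by rewrite -eqL mulG_subr.
have cL'K : L' \subset 'C(K) := subset_trans sL'L cLK.
have IH' := IH (fun j => B (widen_ord (leqnSn n) j)) (fun j => HB _) K L' defL' sK cL'K.
have := @semisimple_step (K <*> L')%G Bm.
rewrite /= cent_joinEr // => /(_ IH').
have [sB nB] := HB ord_max.
have sBm : simple Bm by rewrite -defBm.
have nBm : ~~ abelian Bm by rewrite -defBm.
move=> /(_ sBm nBm).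
rewrite -mulgA eqL; apply.
rewrite -cent_joinEr // centY subsetI.
by rewrite cBL' (subset_trans sBmL cLK).
Qed.
End Comb.


Definition pb (P : Prop) : bool := if excluded_middle_informative P then true else false.
Lemma pbP (P : Prop) : reflect P (pb P).
Proof. by rewrite /pb; case: excluded_middle_informative => h; constructor. Qed.

Section Main.
Variables (gT : finGroupType) (I : Type) (HS : simple [set: gT]) (HnA : ~~ abelian [set: gT]).
Variable H : finGroupType.
Implicit Types (g : (I -> gT) -> H) (A : I -> bool).

Definition im g : {set H} := [set h | pb (exists x, g x = h)].
Lemma imP g h : reflect (exists x, g x = h) (h \in im g).
Proof. by rewrite inE; apply: pbP. Qed.

Lemma im_group g : cart_hom g -> group_set (im g).
Proof.
move=> Hg; apply/group_setP; split.
  by apply/imP; exists (@cone gT I); exact: hom1.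
by move=> _ _ /imP [x <-] /imP [y <-]; apply/imP; exists (cart_mul x y).
Qed.

Lemma piece_not_all (G : {set H}) g1 g2 : cart_hom g2 ->
  (forall y z, commute (g1 y) (g2 z)) -> (exists z, g2 z != 1) ->
  (forall z, g2 z \in G) ->
  ~ (forall h, h \in G -> exists y, g1 y = h).
Proof.
move=> Hg2 Hc [z0 nz] Hin Hs; move/eqP: nz; apply.
apply: (abelian_trivial HS HnA Hg2) => y z.
have [w ew] := Hs _ (Hin z).
by rewrite -ew; apply: commute_sym.
Qed.

Lemma simple_case (G : {group H}) g : cart_hom g ->
  (forall x, g x \in G) -> (forall h, h \in G -> exists x, g x = h) ->
  G :!=: 1 ->
  ~ (exists A, (exists y, g (restr A y) != 1) /\ (exists z, g (restr (compl A) z) != 1)) ->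
  semisimple_fg G.
Proof.
move=> Hg Hin Hs nG nP.
have key : forall x, exists s, g x = g (fun _ => s).
  move=> x; pose As s : I -> bool := fun i => x i == s.
  have [[s Hs0]|Hno] := classic (exists s, forall y, g (restr (compl (As s)) y) = 1).
    exists s.
    rewrite (restr_split (As s) x) Hg Hs0 mulg1.
    rewrite (restr_split (As s) (fun _ => s)) Hg Hs0 mulg1.
    congr g; apply: functional_extensionality => i; rewrite /restr /As.
    by case: eqP.
  exfalso.
  have H1 : forall s y, g (restr (As s) y) = 1.
    move=> s y; apply: NNPP => hy; apply: nP; exists (As s); split.
      by exists y; apply/eqP.
    apply: NNPP => hc; apply: Hno; exists s => z; apply: NNPP => hz; apply: hc.
    by exists z; apply/eqP.
  have HL : forall (L : seq gT) y, g (restr (fun i => x i \in L) y) = 1.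
    elim=> [|s L IH] y.
      have -> : restr (fun i => x i \in [::]) y = @cone gT I.
        by apply: functional_extensionality => i; rewrite /restr in_nil.
      exact: hom1.
    have -> : restr (fun i => x i \in s :: L) y =
      cart_mul (restr (As s) y) (restr (fun i => x i \in L) (restr (compl (As s)) y)).
      apply: functional_extensionality => i; rewrite /restr /cart_mul /compl /As in_cons.
      by case: (x i == s); case: (x i \in L); rewrite /= ?mulg1 ?mul1g.
    by rewrite Hg H1 IH mulg1.
  move/eqP: nG; apply; apply/eqP; rewrite eqEsubset sub1G andbT.
  apply/subsetP => h /Hs [y <-]; rewrite inE.
  have -> : y = restr (fun i => x i \in enum gT) y.
    by apply: functional_extensionality => i; rewrite /restr mem_enum.
  by rewrite HL.
pose phi (s : gT) : H := g (fun _ => s).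
have phiM : {in [set: gT] &, {morph phi : a b / a * b}}.
  by move=> a b _ _; rewrite /phi -Hg.
pose m := Morphism phiM.
have eim : m @* [set: gT] = G.
  apply/eqP; rewrite eqEsubset; apply/andP; split.
    by apply/subsetP => _ /morphimP [s _ _ ->]; exact: Hin.
  apply/subsetP => h /Hs [x <-]; have [s ->] := key x.
  by apply: (mem_morphim m); rewrite inE.
have [_ hs] := (elimT (simpleP [set: gT]%G)) HS.
have inj : 'injm m.
  case: (hs _ (ker_normal m)) => e.
    by apply/subsetP => u; rewrite -[u \in 'ker m]/(u \in gval ('ker m)%G) e.
  exfalso; move/eqP: nG; apply; apply/eqP; rewrite eqEsubset sub1G andbT.
  apply/subsetP => _ /Hs [x <-]; have [s ->] := key x.
  have : s \in 'ker m by rewrite e inE.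
  by move/mker => /= e1; rewrite -[g _]/(phi s) e1 inE.
have iso : [set: gT] \isog G by rewrite -eim; apply: sub_isog.
exists 1%N, (fun _ => G); split.
  by move=> _; rewrite -(isog_simple iso) -(isog_abelian iso).
by rewrite big_ord1.
Qed.

End Main.


Section Ind.
Variables (gT : finGroupType) (I : Type) (HS : simple [set: gT]) (HnA : ~~ abelian [set: gT]).
Variable H : finGroupType.

Lemma main_ind n : forall (G : {group H}) (g : (I -> gT) -> H), #|G| <= n ->
  cart_hom g -> (forall x, g x \in G) -> (forall h, h \in G -> exists x, g x = h) ->
  semisimple_fg G.
Proof.
elim: n => [|n IH] G g cG Hg Hin Hs.
  by move: (cardG_gt0 G); rewrite leqn0 in cG; rewrite (eqP cG).
have [G1|nG] := eqVneq (G : {set H}) 1.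
  exists 0%N, (fun _ => 1%G); split; first by case.
  by rewrite big_ord0 G1.
have [[A [nA ncA]]|nP] := classic (exists A : I -> bool,
   (exists y, g (restr A y) != 1) /\ (exists z, g (restr (compl A) z) != 1)); last first.
  exact: (simple_case HS HnA Hg Hin Hs nG nP).
pose g1 := fun y => g (restr A y).
pose g2 := fun y => g (restr (compl A) y).
have Hg1 : cart_hom g1 := restr_hom A Hg.
have Hg2 : cart_hom g2 := restr_hom (compl A) Hg.
have c12 : forall y z, commute (g1 y) (g2 z) by move=> y z; exact: restr_comm.
have c21 : forall y z, commute (g2 y) (g1 z) by move=> y z; exact/commute_sym.
pose K1 := Group (im_group Hg1).
pose K2 := Group (im_group Hg2).
have sub1 : K1 \subset G by apply/subsetP => _ /imP [y <-]; exact: Hin.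
have sub2 : K2 \subset G by apply/subsetP => _ /imP [y <-]; exact: Hin.
have pr1 : K1 \proper G.
  rewrite properEneq sub1 andbT; apply/eqP => e.
  apply: (piece_not_all HS HnA Hg2 c12 ncA) => [z|h hG]; first exact: Hin.
  by move: hG; rewrite -e; move/imP.
have pr2 : K2 \proper G.
  rewrite properEneq sub2 andbT; apply/eqP => e.
  apply: (piece_not_all HS HnA Hg1 c21 nA) => [z|h hG]; first exact: Hin.
  by move: hG; rewrite -e; move/imP.
have s1 : semisimple_fg K1.
  apply: (IH _ g1) => //; first by rewrite -ltnS (leq_trans (proper_card pr1)).
    by move=> x; apply/imP; exists x.
  by move=> h /imP.
have s2 : semisimple_fg K2.
  apply: (IH _ g2) => //; first by rewrite -ltnS (leq_trans (proper_card pr2)).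
    by move=> x; apply/imP; exists x.
  by move=> h /imP.
have eG : (G : {set H}) = K1 * K2.
  apply/eqP; rewrite eqEsubset mul_subG // andbT.
  apply/subsetP => _ /Hs [x <-]; rewrite (restr_split A x) Hg.
  by apply: mem_mulg; apply/imP; exists x.
have c : K2 \subset 'C(K1).
  apply/centsP => _ /imP [z <-] _ /imP [y <-]; first [exact: c12 | exact: c21].
have [m [B [HB eB]]] := s2.
rewrite eG; exact: (semisimple_comb HB eB s1 c).
Qed.

End Ind.

Theorem mainTheorem9 (gT : finGroupType) (I : Type)
  (HS : simple [set: gT]) (HnA : ~~ abelian [set: gT])
  (H : finGroupType) (f : (I -> gT) -> H)
  (Hf : cart_hom f) (Hsurj : forall h : H, exists x : I -> gT, f x = h) :
  semisimple_fg [set: H].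
Proof.
apply: (main_ind HS HnA (n := #|[set: H]|) (G := [set: H]%G) (g := f)) => //.
by move=> x; rewrite inE.
Qed.
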